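(* Let $\Gamma,\Delta$ be finitely generated groups acting continuously on compact metric spaces $Y$ and $X$ respectively, where $Y$ is connected, the action $\Gamma\curvearrowright Y$ has at least one free orbit, and the action $\Delta\curvearrowright X$ is free. Let $f:Y\to X$ be a continuous map inducing a quasi-isometry of warped cones, i.e. there are an index set $I$, maps $I\ni i\mapsto t_i\in(0,\infty)$ and $I\ni i\mapsto \tau_i\in(0,\infty)$ that are both surjective onto $(0,\infty)$, and constants $C\ge1$, $A\ge0$ such that for every $i\in I$ the map $f:(t_iY,d_\Gamma)\to(\tau_iX,d_\Delta)$ satisfies $C^{-1}d_\Gamma(y,y')-A\le d_\Delta(f(y),f(y'))\le Cd_\Gamma(y,y')+A$ for all $y,y'$ and the $A$-neighbourhood of $f(Y)$ in $(\tau_iX,d_\Delta)$ is all of $\tau_iX$. Let $\Delta'=\{\delta\in\Delta:\delta\,\mathrm{im}(f)=\mathrm{im}(f)\}$. Then: (1) $\Delta'$ has finite index in $\Delta$ and there is a short exact sequence $1\to F\to\Gamma\to\Delta'\to1$ with $F$ finite; (2) there is a homeomorphism $h:\mathrm{im}(f)\to Y/F$ such that the quotient map $q:Y\to Y/F$ equals $h\circ f$, and $h$ conjugates the actions $\Delta'\curvearrowright\mathrm{im}(f)$ and $\Gamma/F\curvearrowright Y/F$; (3) $\mathrm{im}(f)$ is one of $[\Delta:\Delta']$ many connected components of $X$, and $\Delta$ acts transitively on them. In particular, if $f$ is a homeomorphism, then $\Gamma$ and $\Delta$ are isomorphic and the actions are conjugate by $f$.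
   Context: $S$ is a fixed finite symmetric generating set of the group, $|\gamma|$ the word length. For a compact metric space $(Y,d)$ with an action of $\Gamma=\langle S\rangle$ and $t>0$, $tY$ denotes $Y$ with metric $td$ and $d_\Gamma$ is the largest metric on $tY$ with $d_\Gamma(y,y')\le t\,d(y,y')$ and $d_\Gamma(y,sy)\le1$ for all $y,y'\in Y$, $s\in S$ (the warped metric). A free orbit is an orbit $\Gamma y$ with trivial stabiliser of $y$. *)

(* Defs.v *)
From Stdlib Require List.
From HB Require Import structures.
From mathcomp Require Import all_boot all_order all_algebra.
From mathcomp Require Import boolp classical_sets reals.

Set Implicit Arguments.
Unset Strict Implicit.
Unset Printing Implicit Defensive.

Import Order.TTheory GRing.Theory Num.Theory.
Local Open Scope classical_set_scope.
Local Open Scope ring_scope.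

Section Defs.
Variable R : realType.

Definition is_metric (T : Type) (d : T -> T -> R) : Prop :=
  (forall x y, 0 <= d x y) /\
  (forall x y, d x y = 0 <-> x = y) /\
  (forall x y, d x y = d y x) /\
  (forall x y z, d x z <= d x y + d y z).

Definition mopen (T : Type) (d : T -> T -> R) (U : set T) : Prop :=
  forall x, U x -> exists e : R, 0 < e /\ forall y, d x y < e -> U y.

Definition mcontinuous (T U : Type) (dT : T -> T -> R) (dU : U -> U -> R)
  (f : T -> U) : Prop :=
  forall x (e : R), 0 < e -> exists del : R, 0 < del /\
    forall x', dT x x' < del -> dU (f x) (f x') < e.

Definition mcompact (T : Type) (d : T -> T -> R) : Prop :=
  forall (I : Type) (U : I -> set T),
    (forall i, mopen d (U i)) -> (forall x, exists i, U i x) ->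
    exists l : list I, forall x, exists i, List.In i l /\ U i x.

Definition mconnected_set (T : Type) (d : T -> T -> R) (A : set T) : Prop :=
  ~ (exists U V : set T, mopen d U /\ mopen d V /\
       (forall x, A x -> U x \/ V x) /\
       (exists x, A x /\ U x) /\ (exists x, A x /\ V x) /\
       (forall x, A x -> U x -> V x -> False)).

Definition mconnected (T : Type) (d : T -> T -> R) : Prop :=
  mconnected_set d setT.

Definition mcomponent (T : Type) (d : T -> T -> R) (C : set T) : Prop :=
  (exists x, C x) /\ mconnected_set d C /\
  (forall C', mconnected_set d C' -> C `<=` C' -> C' = C).

Definition mhomeomorphism (T U : Type) (dT : T -> T -> R) (dU : U -> U -> R)
  (f : T -> U) : Prop :=
  exists g : U -> T, cancel f g /\ cancel g f /\
    mcontinuous dT dU f /\ mcontinuous dU dT g.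

Definition warp_admissible (G : groupType) (T : Type) (act : G -> T -> T)
  (S : seq G) (d : T -> T -> R) (t : R) (D : T -> T -> R) : Prop :=
  is_metric D /\ (forall y y', D y y' <= t * d y y') /\
  (forall y s, s \in S -> D y (act s y) <= 1).

(* d_Gamma on tY : the largest admissible metric, i.e. the pointwise
   supremum of the admissible metrics *)
Definition warped_dist (G : groupType) (T : Type) (act : G -> T -> T)
  (S : seq G) (d : T -> T -> R) (t : R) (y y' : T) : R :=
  sup [set r : R | exists D, warp_admissible act S d t D /\ r = D y y'].

End Defs.

Definition is_action (G : groupType) (T : Type) (act : G -> T -> T) : Prop :=
  (forall x, act 1%g x = x) /\
  (forall g h x, act (g * h)%g x = act g (act h x)).

Definition free_orbit_at (G : groupType) (T : Type) (act : G -> T -> T)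
  (y : T) : Prop := forall g, act g y = y -> g = 1%g.

Definition free_action (G : groupType) (T : Type) (act : G -> T -> T) : Prop :=
  forall y, free_orbit_at act y.

Definition sym_gen_set (G : groupType) (S : seq G) : Prop :=
  (forall s, s \in S -> (s^-1)%g \in S) /\
  (forall g : G, exists l : seq G, all (fun s => s \in S) l /\
      g = foldr (fun a b => (a * b)%g) 1%g l).

Definition group_hom (G H : groupType) (phi : G -> H) : Prop :=
  forall g h, phi (g * h)%g = (phi g * phi h)%g.

Definition has_card (T : Type) (A : set T) (n : nat) : Prop :=
  exists e : 'I_n -> T, injective e /\ range e = A.

Definition left_cosets (G : groupType) (H : set G) : set (set G) :=
  [set [set (g * h)%g | h in H] | g in setT].

(* orbit space of the restriction of act to F: points are F-orbits *)
Definition orbit_space (G : groupType) (T : Type) (act : G -> T -> T)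
  (F : set G) : Type :=
  {S : set T | exists y, S = [set act g y | g in F]}.

Definition orbit_proj (G : groupType) (T : Type) (act : G -> T -> T)
  (F : set G) (y : T) : orbit_space act F :=
  exist _ [set act g y | g in F] (ex_intro _ y erefl).

Definition quotient_open (T Q : Type) (openT : set T -> Prop) (q : T -> Q)
  (V : set Q) : Prop := openT (q @^-1` V).

Definition subspace_open (T : Type) (openT : set T -> Prop) (P : set T)
  (V : set {x : T | P x}) : Prop :=
  exists U, openT U /\ forall z : {x : T | P x}, V z <-> U (proj1_sig z).

Definition homeomorphism (A B : Type) (openA : set A -> Prop)
  (openB : set B -> Prop) (h : A -> B) : Prop :=
  bijective h /\ (forall V, openB V -> openA (h @^-1` V)) /\
  (forall U, openA U -> openB (h @` U)).

Arguments subspace_open {T} openT P V.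
Arguments orbit_space {G T} act F.
Arguments orbit_proj {G T} act F y.
Arguments quotient_open {T Q} openT q V.
Arguments homeomorphism {A B} openA openB h.
Arguments warped_dist {R G T} act S d t y y'.
Arguments left_cosets {G} H _.
Arguments has_card {T} A n.

(* Main.v *)
Require Import Defs.
From HB Require Import structures.
From mathcomp Require Import all_boot all_order all_algebra.
From mathcomp Require Import boolp classical_sets reals.
From mathcomp Require Import lra.
Import Order.TTheory GRing.Theory Num.Theory.
Local Open Scope classical_set_scope.
Local Open Scope ring_scope.

Section Metric.
Variable R : realType.

Definition closedset {T : Type} (d : T -> T -> R) (Z : set T) : Prop :=
  forall p, ~ Z p -> exists e : R, 0 < e /\ forall z, d p z < e -> ~ Z z.

Lemma min_list {I : Type} (l : list I) (P : I -> Prop) (g : I -> R) :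
  (forall i, List.In i l -> P i -> 0 < g i) ->
  exists e : R, 0 < e /\ forall i, List.In i l -> P i -> e <= g i.
Proof.
elim: l => [|a l IH] H.
  by exists 1; split => // i [].
have [e [e0 He]] : exists e : R, 0 < e /\ forall i, List.In i l -> P i -> e <= g i.
  by apply: IH => i Hi; apply: H; right.
have [Pa|nPa] := pselect (P a).
  have ga := H a (or_introl erefl) Pa.
  exists (Num.min e (g a)); split; first by rewrite lt_min e0.
  move=> i [<-|Hi] Pi; first by rewrite ge_min lexx orbT.
  by rewrite ge_min He.
exists e; split => // i [<-|Hi] Pi; first by [].
exact: He.
Qed.

Lemma preimage_open {T U : Type} (dT : T -> T -> R) (dU : U -> U -> R) f V :
  mcontinuous dT dU f -> mopen dU V -> mopen dT (f @^-1` V).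
Proof.
move=> hf hV x Vx; have [e [e0 He]] := hV _ Vx.
have [del [del0 Hd]] := hf x e e0.
by exists del; split => // y /Hd /He.
Qed.

Lemma cont_comp {T U W : Type} (dT : T -> T -> R) (dU : U -> U -> R)
  (dW : W -> W -> R) f g :
  mcontinuous dT dU f -> mcontinuous dU dW g -> mcontinuous dT dW (g \o f).
Proof.
move=> hf hg x e e0; have [d1 [d10 H1]] := hg (f x) e e0.
have [d2 [d20 H2]] := hf x d1 d10.
by exists d2; split => // y /H2 /H1.
Qed.

Lemma image_closed {T U : Type} (dT : T -> T -> R) (dU : U -> U -> R) f K :
  is_metric dU -> mcompact dT -> mcontinuous dT dU f -> closedset dT K ->
  closedset dU (f @` K).
Proof.
move=> [d0 [deq [dsym dtr]]] hc hf hK p npK.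
pose UU (y : T) : set T := if pselect (K y) is left _ then
  [set y' | dU p (f y) / 2 < dU p (f y')] else ~` K.
have Uo : forall y, mopen dT (UU y).
  move=> y; rewrite /UU; case: pselect => Ky.
    move=> y' Hy'; set r := dU p (f y') - dU p (f y) / 2.
    have r0 : 0 < r by rewrite subr_gt0.
    have [del [del0 Hd]] := hf y' r r0.
    exists del; split => // z /Hd hz /=.
    have := dtr p (f z) (f y'); rewrite (dsym (f z)).
    rewrite /r in hz; move=> h. 
    have : dU p (f y') < dU p (f z) + (dU p (f y') - dU p (f y) / 2).
      by apply: (le_lt_trans h); rewrite ltrD2l.
    lra.
  move=> y' Hy'; have [e [e0 He]] := hK _ Hy'.
  by exists e; split => // z /He.
have Ucov : forall y, exists i, UU i y.
  move=> y; exists y; rewrite /UU; case: pselect => Ky //=.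
  have hpos : 0 < dU p (f y).
    rewrite lt_neqAle d0 andbT eq_sym; apply/eqP => /deq E.
    by apply: npK; exists y.
  by rewrite ltr_pdivrMr // ltr_pMr // ltr1n.
have [l Hl] := hc _ UU Uo Ucov.
have pos : forall y, List.In y l -> K y -> 0 < dU p (f y) / 2.
  move=> y _ Ky; rewrite divr_gt0 // lt_neqAle d0 andbT eq_sym.
  by apply/eqP => /deq E; apply: npK; exists y.
have [e [e0 He]] := min_list l K (fun y => dU p (f y) / 2) pos.
exists e; split => // z hz [y Ky fyz].
have [i [il Ui]] := Hl y.
move: Ui; rewrite /UU; case: pselect => Ki //= Ui.
have h := He i il Ki; rewrite fyz in Ui.
by have := lt_le_trans hz (le_trans h (ltW Ui)); rewrite ltxx.
Qed.

Lemma min_list_ex {I : Type} (l : list I) (P : I -> Prop) (Q : I -> R -> Prop) :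
  (forall i e e', 0 < e' -> e' <= e -> Q i e -> Q i e') ->
  (forall i, List.In i l -> P i -> exists e, 0 < e /\ Q i e) ->
  exists e : R, 0 < e /\ forall i, List.In i l -> P i -> Q i e.
Proof.
move=> Qmon; elim: l => [|a l IH] H.
  by exists 1; split => // i [].
have [e [e0 He]] : exists e : R, 0 < e /\ forall i, List.In i l -> P i -> Q i e.
  by apply: IH => i Hi; apply: H; right.
have [Pa|nPa] := pselect (P a).
  have [ea [ea0 Qa]] := H a (or_introl erefl) Pa.
  exists (Num.min e ea); split; first by rewrite lt_min e0.
  move=> i [<-|Hi] Pi.
    by apply: (Qmon _ ea) => //; [rewrite lt_min e0 | rewrite ge_min lexx orbT].
  by apply: (Qmon _ e) => //; [rewrite lt_min e0 | rewrite ge_min lexx | apply: He].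
exists e; split => // i [<-|Hi] Pi; first by [].
exact: He.
Qed.

Lemma closed_openC {T : Type} (d : T -> T -> R) Z :
  closedset d Z -> mopen d (~` Z).
Proof. by move=> h p /h [e [e0 He]]; exists e; split => // z /He. Qed.

Lemma connected_clopen {T : Type} (d : T -> T -> R) A Z :
  mconnected_set d A -> mopen d Z -> closedset d Z ->
  (exists x, A x /\ Z x) -> forall x, A x -> Z x.
Proof.
move=> hA hZ cZ [x0 [Ax0 Zx0]] x Ax; apply: contrapT => nZx.
apply: hA; exists Z, (~` Z); split => //; split; first exact: closed_openC.
split; first by move=> y _; case: (pselect (Z y)); [left|right].
split; first by exists x0.
split; first by exists x.
by move=> y _ Zy /(_ Zy).
Qed.

Lemma image_connected {T U : Type} (dT : T -> T -> R) (dU : U -> U -> R) f :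
  mconnected dT -> mcontinuous dT dU f -> mconnected_set dU (range f).
Proof.
move=> hc hf [U0 [V0 [oU [oV [cov [[x [[y _ <-] Ux]] [[x' [[y' _ <-] Vx']] dis]]]]]]].
apply: hc; exists (f @^-1` U0), (f @^-1` V0).
split; first exact: (preimage_open dT dU f U0 hf oU).
split; first exact: (preimage_open dT dU f V0 hf oV).
split; first by move=> z _; apply: cov; exists z.
split; first by exists y.
split; first by exists y'.
by move=> z _; apply: dis; exists z.
Qed.

Lemma clopen_partition {T I : Type} (d : T -> T -> R) (L : list I)
  (Z : I -> set T) :
  (forall i, closedset d (Z i)) -> (forall x, exists i, List.In i L /\ Z i x) ->
  (forall i j x, Z i x -> Z j x -> Z i = Z j) -> forall i, mopen d (Z i).
Proof.
move=> cZ cov ov i p Zp.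
have [e [e0 He]] := min_list_ex L (fun j => Z j <> Z i)
  (fun j e => forall z, d p z < e -> ~ Z j z)
  (fun j e e' _ le h z hz => h z (lt_le_trans hz le))
  (fun j _ nji => cZ j p (fun Zjp => nji (ov j i p Zjp Zp))).
exists e; split => // z hz.
have [j [jL Zjz]] := cov z.
have [E|NE] := pselect (Z j = Z i); first by rewrite -E.
by have := He j jL NE z hz.
Qed.

End Metric.

Arguments closedset {R T}.
Arguments min_list {R I}.
Arguments min_list_ex {R I}.
Arguments closed_openC {R T}.
Arguments connected_clopen {R T}.
Arguments image_connected {R T U}.
Arguments clopen_partition {R T I}.
Arguments preimage_open {R T U}.
Arguments cont_comp {R T U W}.
Arguments image_closed {R T U}.

Section Warp.
Variable R : realType.
Variables (G : groupType) (T : Type) (act : G -> T -> T) (S : seq G)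
  (d : T -> T -> R).
Hypothesis hd : is_metric d.

Definition prodw (w : seq G) : G := foldr (fun a b => (a * b)%g) 1%g w.

Lemma min1_tri (a b c : R) : 0 <= b -> 0 <= c -> a <= b + c ->
  Num.min a 1 <= Num.min b 1 + Num.min c 1.
Proof.
move=> b0 c0 abc.
have m1 : Num.min a 1 <= 1 by rewrite ge_min lexx orbT.
have mb : 0 <= Num.min b 1 by rewrite le_min b0 ler01.
have mc : 0 <= Num.min c 1 by rewrite le_min c0 ler01.
have [hb|hb] := leP 1 b.
  have : 1 <= Num.min b 1 by rewrite le_min hb lexx.
  lra.
have [hc|hc] := leP 1 c.
  have : 1 <= Num.min c 1 by rewrite le_min hc lexx.
  lra.
by rewrite ge_min abc.
Qed.

Lemma min_admissible t : 0 < t ->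
  warp_admissible act S d t (fun u v => Num.min (t * d u v) 1).
Proof.
move: hd => [d0 [deq [dsym dtr]]] t0.
have mn u v : 0 <= Num.min (t * d u v) 1.
  by rewrite le_min ler01 andbT mulr_ge0 // ltW.
split; last split.
- split; first exact: mn.
  split.
    move=> x y; split; last first.
      by move=> ->; rewrite (proj2 (deq y y) erefl) mulr0 min_l ?ler01.
    move=> h; apply/deq; move: h; rewrite /Num.min; case: ifP => _; last first.
      by move=> /eqP; rewrite oner_eq0.
    by move=> /eqP; rewrite mulf_eq0 (gt_eqF t0) /= => /eqP.
  split; first by move=> x y; rewrite dsym.
  move=> x y z; have := dtr x y z; have := d0 x y; have := d0 y z.
  move=> h1 h2 h3; apply: min1_tri.
  + exact: mulr_ge0 (ltW t0) h2.
  + exact: mulr_ge0 (ltW t0) h1.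
  + by rewrite -mulrDr ler_pM2l.
- by move=> y y'; rewrite ge_min lexx.
- by move=> y s _; rewrite ge_min lexx orbT.
Qed.

Lemma warped_ub t y y' :
  has_ubound [set r : R | exists D, warp_admissible act S d t D /\ r = D y y'].
Proof. by exists (t * d y y') => r [D [[_ [H _]] ->]]. Qed.

Lemma le_warped t D y y' : warp_admissible act S d t D ->
  D y y' <= warped_dist act S d t y y'.
Proof. by move=> hD; apply: ub_le_sup; [exact: warped_ub | exists D]. Qed.

Lemma warped_le t y y' b : 0 < t ->
  (forall D, warp_admissible act S d t D -> D y y' <= b) ->
  warped_dist act S d t y y' <= b.
Proof.
move=> t0 H; apply: ge_sup; first by exists (Num.min (t * d y y') 1), (fun u v => Num.min (t * d u v) 1); split => //; exact: min_admissible.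
by move=> r [D [hD ->]]; apply: H.
Qed.

Lemma warped_ge0 t y y' : 0 < t -> 0 <= warped_dist act S d t y y'.
Proof.
move=> t0; apply: (le_trans _ (le_warped _ _ y y' (min_admissible t t0))).
by rewrite le_min ler01 andbT; apply: mulr_ge0; [exact: ltW | case: hd].
Qed.

Lemma warped_refl t y : 0 < t -> warped_dist act S d t y y = 0.
Proof.
move=> t0; apply/eqP; rewrite eq_le warped_ge0 // andbT.
by apply: warped_le => // D [[_ [deq _]] _]; rewrite (proj2 (deq y y) erefl).
Qed.

Lemma warped_tri t x y z : 0 < t ->
  warped_dist act S d t x z <= warped_dist act S d t x y + warped_dist act S d t y z.
Proof.
move=> t0; apply: warped_le => // D hD.
have [[_ [_ [_ tr]]] _] := hD.
by apply: le_trans (tr x y z) _; apply: lerD; apply: le_warped.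
Qed.

Lemma warped_gen t y s : 0 < t -> s \in S -> warped_dist act S d t y (act s y) <= 1.
Proof. by move=> t0 sS; apply: warped_le => // D [_ [_ H]]; apply: H. Qed.

Hypothesis hact : is_action act.

Lemma act_prodw w y : act (prodw (w)) y = foldr act y w.
Proof.
elim: w => [|a w IH] /=; first by case: hact.
by rewrite (proj2 hact) IH.
Qed.

Lemma warped_word t y w : 0 < t -> all (fun s => s \in S) w ->
  warped_dist act S d t y (act (prodw w) y) <= (size w)%:R.
Proof.
move=> t0; elim: w => [|a w IH] /=.
  by move=> _; rewrite (proj1 hact) warped_refl.
move=> /andP [aS wS]; rewrite (proj2 hact).
apply: le_trans (warped_tri _ _ (act (prodw w) y) _ t0) _.
rewrite -addn1 natrD; apply: lerD; first exact: IH.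
exact: warped_gen.
Qed.

End Warp.

Arguments prodw {G}.
Arguments min_admissible {R G T} act S {d} hd {t}.
Arguments le_warped {R G T act S d t} D y y'.
Arguments warped_le {R G T act S d} hd {t y y'} b.
Arguments warped_ge0 {R G T act S d} hd {t} y y'.
Arguments warped_refl {R G T act S d} hd {t} y.
Arguments warped_tri {R G T act S d} hd {t} x y z.
Arguments warped_gen {R G T act S d} hd {t} y s.
Arguments act_prodw {G T act} hact w y.
Arguments warped_word {R G T act S d} hd hact {t} y w.

Section Chain.
Variable R : realType.
Variables (G : groupType) (T : Type) (act : G -> T -> T) (S : seq G)
  (d : T -> T -> R).
Hypothesis hd : is_metric d.
Hypothesis hS : forall s, s \in S -> (s^-1)%g \in S.
Hypothesis hact : is_action act.
Hypothesis hc : forall g, mcontinuous d d (act g).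

Fixpoint chain (x z : T) (m : R) (w : seq G) : Prop :=
  match w with
  | [::] => d x z <= m
  | s :: w' => s \in S /\ exists u m0, chain x u m0 w' /\ d (act s u) z <= m - m0
  end.

Lemma chain_ge0 {x z m w} : chain x z m w -> 0 <= m.
Proof.
have d0 := proj1 hd.
elim: w z m => [|s w IH] z m /=; first by apply: le_trans; apply: d0.
move=> [_ [u [m0 [/IH h1 h2]]]]; have := d0 (act s u) z; lra.
Qed.

Lemma chain_inS {x z m w} : chain x z m w -> all (fun s => s \in S) w.
Proof.
elim: w z m => [|s w IH] z m //= [sS [u [m0 [/IH h _]]]].
by rewrite sS h.
Qed.

Lemma chain_ext {x u} v {m w} : chain x u m w -> chain x v (m + d u v) w.
Proof.
have [_ [_ [_ tr]]] := hd.
case: w => [|s w] /=; first by move=> h; apply: le_trans (tr x u v) _; rewrite lerD2r.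
move=> [sS [u' [m0 [h1 h2]]]]; split => //; exists u', m0; split => //.
have := tr (act s u') u v; lra.
Qed.

Lemma chain_jump {x u m w s} : s \in S -> chain x u m w -> chain x (act s u) m (s :: w).
Proof.
move=> sS h /=; split => //; exists u, m; split => //.
by rewrite subrr (proj2 ((proj1 (proj2 hd)) _ _) erefl).
Qed.

Lemma chain_conv x w e : 0 < e -> exists eta, 0 < eta /\
  forall z m, chain x z m w -> m < eta -> d (act (prodw w) x) z < e.
Proof.
have [d0 [deq [dsym tr]]] := hd.
elim: w e => [|s w IH] e e0 /=.
  exists e; split => // z m h1 h2.
  rewrite (proj1 hact); exact: le_lt_trans h1 h2.
have e20 : 0 < e / 2 by rewrite divr_gt0.
have [del [del0 Hdel]] := hc s (act (prodw w) x) (e / 2) e20.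
have [eta [eta0 Heta]] := IH del del0.
exists (Num.min eta (e / 2)); split; first by rewrite lt_min eta0.
move=> z m [_ [u [m0 [h1 h2]]]]; rewrite lt_min => /andP [m1 m2].
have m0ge := chain_ge0 h1.
have := d0 (act s u) z => dz.
have hm0 : m0 < eta by lra.
have := Hdel _ (Heta _ _ h1 hm0) => h3.
rewrite (proj2 hact); apply: le_lt_trans (tr _ (act s u) _) _.
lra.
Qed.

Fixpoint words (n : nat) : seq (seq G) :=
  match n with
  | 0 => [:: [::]]
  | n'.+1 => [::] :: [seq s :: w | s <- S, w <- words n']
  end.

Lemma words_complete n w : all (fun s => s \in S) w -> (size w <= n)%N -> w \in words n.
Proof.
elim: n w => [|n IH] [|s w] //= /andP [sS wS] hs.
rewrite in_cons /=; apply: (allpairs_f (fun s w => s :: w)) => //.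
exact: IH.
Qed.

Section Rho.
Variables (t : R) (x : T).
Hypothesis t0 : 0 < t.

Definition costs (z : T) : set R :=
  [set c | exists m w, chain x z m w /\ c = t * m + (size w)%:R].

Definition rho z := inf (costs z).

Lemma costs_ne z : costs z !=set0.
Proof. by exists (t * d x z + 0); exists (d x z), [::]; split => //=. Qed.

Lemma costs_lb z : has_lbound (costs z).
Proof.
exists 0; move=> c [m [w [/chain_ge0 h ->]]].
by apply: addr_ge0; [exact: mulr_ge0 (ltW t0) h | exact: ler0n].
Qed.

Lemma rho_ext u v : rho v <= rho u + t * d u v.
Proof.
rewrite -lerBlDr; apply: lb_le_inf; first exact: costs_ne.
move=> c [m [w [h ->]]]; rewrite lerBlDr.
apply: ge_inf; first exact: costs_lb.
exists (m + d u v), w; split; first exact: chain_ext.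
by rewrite mulrDr addrAC.
Qed.

Lemma rho_jump u s : s \in S -> rho (act s u) <= rho u + 1.
Proof.
move=> sS; rewrite -lerBlDr; apply: lb_le_inf; first exact: costs_ne.
move=> c [m [w [h ->]]]; rewrite lerBlDr.
apply: ge_inf; first exact: costs_lb.
exists m, (s :: w); split; first exact: chain_jump.
by rewrite /= -addn1 natrD addrA.
Qed.

Lemma rho_x : rho x <= 0.
Proof.
apply: ge_inf; first exact: costs_lb.
exists 0, [::]; split; last by rewrite mulr0 addr0.
by rewrite /= (proj2 ((proj1 (proj2 hd)) _ _) erefl).
Qed.

Definition Drho u v := Num.max (Num.min (t * d u v) 1) `|rho u - rho v|.

Lemma Drho_adm : warp_admissible act S d t Drho.
Proof.
have [[m0 [meq [msym mtr]]] [mle mgen]] := min_admissible act S hd t0.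
have [d0 [deq [dsym tr]]] := hd.
have dd u v : `|rho u - rho v| <= t * d u v.
  rewrite ler_norml; have := rho_ext u v; have := rho_ext v u.
  rewrite dsym; lra.
split; last split.
- split; first by move=> u v; rewrite le_max m0.
  split.
    move=> u v; split; last first.
      by move=> ->; rewrite /Drho subrr normr0; apply/eqP; rewrite eq_le le_max lexx orbT andbT ge_max lexx andbT; rewrite (proj2 (meq v v) erefl).
    move=> h; apply/meq; apply/eqP; rewrite eq_le m0 andbT.
    by rewrite -h le_max lexx.
  split; first by move=> u v; rewrite /Drho msym distrC.
  move=> u v w; rewrite /Drho ge_max; apply/andP; split.
    apply: le_trans (mtr u v w) _; apply: lerD; rewrite le_max lexx //.
  apply: le_trans (ler_distD (rho v) (rho u) (rho w)) _.
  by apply: lerD; rewrite le_max lexx orbT.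
- move=> u v; rewrite /Drho ge_max; apply/andP; split; first exact: mle.
  exact: dd.
- move=> u s sS; rewrite /Drho ge_max; apply/andP; split; first exact: mgen.
  rewrite ler_norml; have := rho_jump u _ sS.
  have := rho_jump (act s u) _ (hS _ sS).
  rewrite -(proj2 hact) mulVg (proj1 hact); lra.
Qed.

Lemma rho_le_warped z : rho z <= warped_dist act S d t x z.
Proof.
apply: le_trans (le_warped _ _ _ Drho_adm); rewrite /Drho le_max.
apply/orP; right; have hx := rho_x; rewrite ler_normr; apply/orP.
by right; rewrite opprB; lra.
Qed.

End Rho.

Lemma core (K : R) (N : nat) (x : T) (Z : set T) :
  K + 1 <= N%:R -> closedset d Z ->
  (forall t, 0 < t -> exists z, Z z /\ warped_dist act S d t x z <= K) ->
  exists w, w \in words N /\ Z (act (prodw w) x).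
Proof.
move=> KN cZ H; apply: contrapT => nex.
have hw : forall w, List.In w (words N) -> True -> exists e, 0 < e /\
    (forall z m, chain x z m w -> m < e -> ~ Z z).
  move=> w win _.
  have wN : w \in words N.
    by elim: (words N) win => [|a l IH] //= [->|/IH]; rewrite in_cons ?eqxx // => ->; rewrite orbT.
  have [e [e0 He]] := cZ (act (prodw w) x) (fun Zw => nex (ex_intro _ w (conj wN Zw))).
  have [eta [eta0 Heta]] := chain_conv x w e e0.
  by exists eta; split => // z m c lt; exact: He _ (Heta _ _ c lt).
have [eta [eta0 Heta]] := min_list_ex (words N) (fun _ => True)
  (fun w e => forall z m, chain x z m w -> m < e -> ~ Z z)
  (fun w e e' _ le h z m c lt => h z m c (lt_le_trans lt le)) hw.
pose t := (`|K| + 1) / eta.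
have t0 : 0 < t by rewrite divr_gt0 // ltr_wpDl.
have [z [Zz hz]] := H t t0.
have hr := le_trans (rho_le_warped t x t0 z) hz.
have [c [m [w [ch ->]]] lt] : exists2 c, costs t x z c & c < K + 1.
  apply: contrapT => nc; have : K + 1 <= rho t x z.
    apply: lb_le_inf; first exact: costs_ne.
    by move=> c hc0; rewrite leNgt; apply/negP => hlt; apply: nc; exists c.
  lra.
have m0 := chain_ge0 ch.
have tm0 : 0 <= t * m by exact: mulr_ge0 (ltW t0) m0.
have wN : w \in words N.
  apply: words_complete; first exact: chain_inS ch.
  rewrite -(ler_nat R); apply: (le_trans _ KN).
  move: lt; lra.
apply: (Heta w _ I z m ch _ Zz).
  by elim: (words N) wN => [|a l IH] //; rewrite in_cons => /orP [/eqP ->|/IH]; [left|right].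
have tm : t * m < `|K| + 1.
  have := ler_norm K; have : 0 <= (size w)%:R :> R by []; move: lt; lra.
by rewrite -(ltr_pM2l t0) {2}/t divfK // gt_eqF.
Qed.

End Chain.

Arguments words {G} S n.
Arguments core {R G T act S d} hd hS hact hc {K N x Z}.

Lemma finite_has_card {T : Type} (l : list T) (A : set T) :
  (forall x, A x -> List.In x l) -> exists n, has_card A n.
Proof.
elim: l A => [|a l IH] A HA.
  exists 0%N, (fun i => False_rect T (Bool.diff_true_false (etrans (esym (ltn_ord i)) (ltn0 i)))).
  split; first by move=> i; case: i.
  apply/seteqP; split; first by move=> x [i]; case: i.
  by move=> x /HA.
have [n [e [ie re]]] : exists n, has_card (A `\ a) n.
  apply: IH => x [Ax nxa]; case: (HA x Ax) => // ax; by case: nxa; rewrite ax.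
have [Aa|nAa] := pselect (A a); last first.
  exists n, e; split => //; rewrite re; apply/seteqP; split => x.
    by case.
  by move=> Ax; split => // xa; move: nAa; rewrite -xa.
exists n.+1, (fun i => match unlift ord_max i with Some j => e j | None => a end).
split.
  move=> i j; case: (unliftP ord_max i) => [i'|] -> ; case: (unliftP ord_max j) => [j'|] -> //.
  - by move=> /ie ->.
  - move=> ea; have : (A `\ a) (e i') by rewrite -re; exists i'.
    by case => _ /(_ ea).
  - move=> ea; have : (A `\ a) (e j') by rewrite -re; exists j'.
    by case => _ /(_ (esym ea)).
apply/seteqP; split => x.
  case=> i _; case: (unlift ord_max i) => [j|] <- //.
  by have [] : (A `\ a) (e j) by rewrite -re; exists j.
move=> Ax; have [xa|xa] := pselect (x = a).
  by exists ord_max => //; rewrite unlift_none xa.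
have : range e x by rewrite re.
by case=> j _ <-; exists (lift ord_max j) => //; rewrite liftK.
Qed.

Lemma eq_closed {R : realType} {T U : Type} (dT : T -> T -> R) (dU : U -> U -> R)
  (F1 F2 : T -> U) : is_metric dU ->
  mcontinuous dT dU F1 -> mcontinuous dT dU F2 ->
  closedset dT [set z | F1 z = F2 z].
Proof.
move=> [d0 [deq [dsym tr]]] c1 c2 p np.
set r := dU (F1 p) (F2 p).
have r0 : 0 < r.
  by rewrite lt_neqAle d0 andbT eq_sym; apply/eqP => /deq.
have r20 : 0 < r / 2 by rewrite divr_gt0.
have [e1 [e10 H1]] := c1 p (r / 2) r20.
have [e2 [e20 H2]] := c2 p (r / 2) r20.
exists (Num.min e1 e2); split; first by rewrite lt_min e10.
move=> z; rewrite lt_min => /andP [z1 z2] /= E.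
have h1 := H1 _ z1; have h2 := H2 _ z2; rewrite E in h1.
have := tr (F1 p) (F2 z) (F2 p); rewrite (dsym (F2 z)); rewrite -/r.
lra.
Qed.

Section Main.
Variable R : realType.
Variables (Gam Del : groupType) (SG : seq Gam) (SD : seq Del)
  (Y X : Type) (dY : Y -> Y -> R) (dX : X -> X -> R)
  (actY : Gam -> Y -> Y) (actX : Del -> X -> X) (f : Y -> X).
Hypotheses (hSG : sym_gen_set SG) (hSD : sym_gen_set SD)
  (hdY : is_metric dY) (hdX : is_metric dX)
  (hYc : mcompact dY) (hXc : mcompact dX) (hYconn : mconnected dY)
  (hactY : is_action actY) (hactX : is_action actX)
  (hactYc : forall g, mcontinuous dY dY (actY g))
  (hactXc : forall g, mcontinuous dX dX (actX g))
  (hfree : free_action actX)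
  (hf : mcontinuous dY dX f).
Variables (y0 : Y) (C A : R).
Hypotheses (hy0 : free_orbit_at actY y0) (hC : 1 <= C) (hA : 0 <= A).
Hypothesis QIlow : forall y y' (K : R),
  (forall tau, 0 < tau -> warped_dist actX SD dX tau (f y) (f y') <= K) ->
  forall t, 0 < t -> warped_dist actY SG dY t y y' <= C * (K + A).
Hypothesis QIgen : forall y s, s \in SG -> forall tau, 0 < tau ->
  warped_dist actX SD dX tau (f y) (f (actY s y)) <= C + A.
Hypothesis QIsurj : forall x tau, 0 < tau ->
  exists y, warped_dist actX SD dX tau x (f y) <= A.

Lemma bound_nat (K : R) : exists N : nat, K + 1 <= N%:R.
Proof.
exists (Num.bound (`|K| + 1)); apply: ltW; apply: le_lt_trans (archi_boundP _).
  by rewrite lerD2r ler_norm.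
by rewrite addr_ge0.
Qed.

Lemma mem_In {T : eqType} (x : T) l : x \in l -> List.In x l.
Proof. by elim: l => [|a l IH] //; rewrite in_cons => /orP [/eqP ->|/IH]; [left|right]. Qed.

Lemma point_closed {T : Type} (d : T -> T -> R) (y : T) :
  is_metric d -> closedset d [set y].
Proof.
move=> [d0 [deq [dsym _]]] p np; exists (d p y); split.
  by rewrite lt_neqAle d0 andbT eq_sym; apply/eqP => /deq.
by move=> z hz /= E; rewrite E ltxx in hz.
Qed.

Lemma coreY (K : R) y y' :
  (forall t, 0 < t -> warped_dist actY SG dY t y y' <= K) ->
  exists g, y' = actY g y.
Proof.
move=> H; have [N hN] := bound_nat K.
have [w [_ hw]] := core hdY (proj1 hSG) hactY hactYc hN (point_closed dY y' hdY)
  (fun t t0 => ex_intro _ y' (conj erefl (H t t0))).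
by exists (prodw w); rewrite hw.
Qed.

Lemma act_free {G : groupType} {T : Type} (act : G -> T -> T) x a b :
  is_action act -> free_orbit_at act x -> act a x = act b x -> a = b.
Proof.
move=> [h1 hM] hx E.
have : act (b^-1 * a)%g x = x by rewrite hM E -hM mulVg h1.
by move=> /hx /mulg1_eq; rewrite invgK.
Qed.

Lemma word_of (g : Del) : exists w, all (fun s => s \in SD) w /\ g = prodw w.
Proof.
have [l [hl ->]] := proj2 hSD g; by exists l.
Qed.

Lemma word_ofY (g : Gam) : exists w, all (fun s => s \in SG) w /\ g = prodw w.
Proof.
have [l [hl ->]] := proj2 hSG g; by exists l.
Qed.

Lemma WX_bound (g : Del) : exists K : R, forall tau x, 0 < tau ->
  warped_dist actX SD dX tau x (actX g x) <= K.
Proof.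
have [w [wS ->]] := word_of g; exists (size w)%:R => tau x t0.
exact: warped_word.
Qed.

Lemma lift_fy y y' (g : Del) : actX g (f y) = f y' ->
  exists h, y' = actY h y.
Proof.
move=> E; have [K HK] := WX_bound g.
apply: (coreY (C * (K + A))); apply: QIlow => tau t0.
by rewrite -E; apply: HK.
Qed.

Lemma freeX a b x : actX a x = actX b x -> a = b.
Proof. exact: act_free hactX (hfree x). Qed.

Lemma coreX_list {K : R} {N x} {Z : set X} : K + 1 <= N%:R -> closedset dX Z ->
  (forall tau, 0 < tau -> exists z, Z z /\ warped_dist actX SD dX tau x z <= K) ->
  exists w, w \in words SD N /\ Z (actX (prodw w) x).
Proof. by move=> hN cZ H; apply: (core hdX (proj1 hSD) hactX hactXc hN cZ H). Qed.

Lemma gen_equiv s : s \in SG -> exists g, forall y, f (actY s y) = actX g (f y).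
Proof.
move=> sS; have [N hN] := bound_nat (C + A).
pose Z (w : seq Del) := [set y | f (actY s y) = actX (prodw w) (f y)].
have cov : forall y, exists w, List.In w (words SD N) /\ Z w y.
  move=> y; have [w [wN hw]] := coreX_list hN (point_closed dX _ hdX)
    (fun tau t0 => ex_intro _ (f (actY s y)) (conj erefl (QIgen y s sS tau t0))).
  by exists w; split; [exact: mem_In | rewrite /Z /= -hw].
have cZ : forall w, closedset dY (Z w).
  move=> w; apply: eq_closed hdX _ _.
    exact: (cont_comp dY dY dX (actY s) f (hactYc s) hf).
  exact: (cont_comp dY dX dX f (actX (prodw w)) hf (hactXc _)).
have ov : forall w w' y, Z w y -> Z w' y -> Z w = Z w'.
  move=> w w' y; rewrite /Z /= => -> /freeX E.
  by rewrite E.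
have oZ := clopen_partition dY (words SD N) Z cZ cov ov.
have [w [_ Zw]] := cov y0.
exists (prodw w) => y.
by apply: (connected_clopen dY setT (Z w) hYconn (oZ w) (cZ w)) => //; exists y0.
Qed.

Lemma equiv_exists (g : Gam) : exists h, forall y, f (actY g y) = actX h (f y).
Proof.
have [w [wS ->]] := word_ofY g.
elim: w wS => [|s w IH] /=.
  by move=> _; exists 1%g => y; rewrite (proj1 hactY) (proj1 hactX).
move=> /andP [sS wS]; have [h Hh] := IH wS; have [k Hk] := gen_equiv s sS.
by exists (k * h)%g => y; rewrite !(proj2 hactY) (proj2 hactX) Hk Hh.
Qed.

Definition phi (g : Gam) : Del := projT1 (cid (equiv_exists g)).

Lemma phiP g y : f (actY g y) = actX (phi g) (f y).
Proof. by rewrite /phi; case: cid. Qed.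

Lemma phi_hom : group_hom phi.
Proof.
move=> a b; apply: (@freeX _ _ (f y0)).
by rewrite -phiP (proj2 hactY) phiP phiP (proj2 hactX).
Qed.

Lemma phi1 : phi 1%g = 1%g.
Proof. by apply: (@freeX _ _ (f y0)); rewrite -phiP !(proj1 hactY, proj1 hactX). Qed.

Lemma phiV g : phi (g^-1)%g = ((phi g)^-1)%g.
Proof.
apply/esym/mulg1_eq; rewrite -phi_hom mulgV; exact: phi1.
Qed.

Lemma lift y y' (g : Del) : actX g (f y) = f y' ->
  exists h, y' = actY h y /\ g = phi h.
Proof.
move=> E; have [h hh] := lift_fy y y' g E; exists h; split => //.
by apply: (@freeX _ _ (f y)); rewrite -phiP -hh.
Qed.

Lemma freeY a b : actY a y0 = actY b y0 -> a = b.
Proof. exact: act_free hactY hy0. Qed.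

Definition F := [set g : Gam | phi g = 1%g].

Lemma F_fin : exists n, has_card F n.
Proof.
have [N hN] := bound_nat (C * (0 + A)).
apply: (finite_has_card (map prodw (words SG N))) => g Fg.
have E : f y0 = f (actY g y0) by rewrite phiP Fg (proj1 hactX).
have H : forall t, 0 < t -> warped_dist actY SG dY t y0 (actY g y0) <= C * (0 + A).
  apply: QIlow => tau t0; rewrite -E warped_refl //.
have [w [wN hw]] := core hdY (proj1 hSG) hactY hactYc hN
  (point_closed dY (actY g y0) hdY) (fun t t0 => ex_intro _ _ (conj erefl (H t t0))).
apply: mem_In; rewrite -(freeY _ _ hw); exact: map_f.
Qed.

Lemma F_mul a b : F a -> F b -> F (a * b)%g.
Proof. by rewrite /F /= phi_hom => -> ->; rewrite mulg1. Qed.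

Lemma F_inv a : F a -> F (a^-1)%g.
Proof. by rewrite /F /= phiV => ->; rewrite invg1. Qed.

Lemma F1 : F 1%g.
Proof. exact: phi1. Qed.

Lemma fiber y y' : f y = f y' -> exists g, F g /\ y' = actY g y.
Proof.
move=> E; have E1 : actX 1%g (f y) = f y' by rewrite (proj1 hactX).
have [g [-> hg]] := lift y y' 1%g E1.
by exists g; split => //; rewrite /F /= -hg.
Qed.

Lemma orbit_proj_eq y y' : f y = f y' -> orbit_proj actY F y = orbit_proj actY F y'.
Proof.
move=> /fiber [g [Fg ->]]; apply: eq_exist; apply/seteqP; split => x [h Fh <-].
  exists (h * g^-1)%g; first by apply: F_mul => //; apply: F_inv.
  by rewrite (proj2 hactY) -(proj2 hactY (g^-1)%g) mulVg (proj1 hactY).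
by exists (h * g)%g; [apply: F_mul | rewrite (proj2 hactY)].
Qed.

Lemma orbit_proj_inv y y' : orbit_proj actY F y = orbit_proj actY F y' -> f y = f y'.
Proof.
move=> /(congr1 (@proj1_sig _ _)) /= E.
have : [set actY g y | g in F] y'.
  by rewrite E; exists 1%g; [exact: F1 | rewrite (proj1 hactY)].
by case=> g Fg <-; rewrite phiP Fg (proj1 hactX).
Qed.

Definition sub := {x : X | range f x}.

Definition pre (x : sub) : Y := let: exist2 y _ _ := cid2 (proj2_sig x) in y.

Lemma pre_spec x : f (pre x) = proj1_sig x.
Proof. by rewrite /pre; case: cid2. Qed.

Definition hh (x : sub) : orbit_space actY F := orbit_proj actY F (pre x).

Lemma hh_f y (x : sub) : proj1_sig x = f y -> hh x = orbit_proj actY F y.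
Proof. by move=> E; apply: orbit_proj_eq; rewrite pre_spec. Qed.

Lemma hh_act g y (x : sub) : proj1_sig x = actX (phi g) (f y) ->
  hh x = orbit_proj actY F (actY g y).
Proof. by rewrite -phiP; apply: hh_f. Qed.

Definition hinv (S : orbit_space actY F) : sub :=
  let y := projT1 (cid (proj2_sig S)) in
  exist _ (f y) (ex_intro2 _ _ y I erefl).

Lemma hh_bij : bijective hh.
Proof.
exists hinv.
  move=> [x px]; rewrite /hinv; case: cid => y /= Ey; apply: eq_exist.
  have := pre_spec (exist _ x px); rewrite /= => <-.
  by apply: orbit_proj_inv; apply: eq_exist; apply/esym.
move=> [S pS]; rewrite /hinv; case: cid => y /= Ey.
by rewrite (hh_f y (exist _ (f y) _) erefl); apply: eq_exist; rewrite Ey.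
Qed.

Lemma hh_homeo : homeomorphism (subspace_open (mopen dX) (range f))
  (quotient_open (mopen dY) (orbit_proj actY F)) hh.
Proof.
split; first exact: hh_bij.
split.
  move=> V oV; rewrite /quotient_open in oV.
  set Uy := orbit_proj actY F @^-1` V in oV.
  have cK : closedset dY (~` Uy).
    by move=> p /contrapT /oV [e [e0 He]]; exists e; split => // z /He Uz /(_ Uz).
  have cI := image_closed dY dX f (~` Uy) hdX hYc hf cK.
  exists (~` (f @` (~` Uy))); split; first exact: closed_openC.
  move=> z; split.
    move=> Vz [y' nUy' E]; apply: nUy'; rewrite /Uy /=.
    by rewrite -(hh_f y' z (esym E)).
  move=> nI; apply: contrapT => nV; apply: nI; exists (pre z).
    by rewrite /Uy /=; rewrite -(hh_f (pre z) z (esym (pre_spec z))).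
  exact: pre_spec.
move=> U [U' [oU' HU]]; rewrite /quotient_open.
have -> : orbit_proj actY F @^-1` (hh @` U) = f @^-1` U'.
  apply/seteqP; split => y /=.
    case=> z Uz E; have := HU z; rewrite /= => -[/(_ Uz) + _].
    suff -> : f y = proj1_sig z by [].
    by rewrite -pre_spec; apply/esym/orbit_proj_inv; rewrite -E.
  move=> U'y; exists (exist _ (f y) (ex_intro2 _ _ y I erefl)).
    by apply/HU.
  exact: hh_f.
exact: preimage_open dY dX f U' hf oU'.
Qed.

Definition Comp (a : Del) : set X := [set actX a (f y) | y in setT].

Lemma Comp_phi a g : Comp (a * phi g)%g = Comp a.
Proof.
apply/seteqP; split => x [y _ <-].
  by exists (actY g y) => //; rewrite phiP (proj2 hactX).
exists (actY (g^-1)%g y) => //.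
by rewrite phiP (proj2 hactX) -(proj2 hactX (phi g)) -phi_hom mulgV phi1 (proj1 hactX).
Qed.

Lemma Comp_overlap a b x : Comp a x -> Comp b x -> Comp a = Comp b.
Proof.
move=> [y _ <-] [y' _ E].
have E2 : actX (b^-1 * a)%g (f y) = f y'.
  by rewrite (proj2 hactX) -E -(proj2 hactX) mulVg (proj1 hactX).
have [g [_ hg]] := lift y y' _ E2.
have -> : a = (b * phi g)%g by rewrite -hg mulVKg.
exact: Comp_phi.
Qed.

Lemma Comp1 : Comp 1%g = range f.
Proof.
apply/seteqP; split => x [y _ <-]; exists y => //; by rewrite (proj1 hactX).
Qed.

Definition Del' := [set d : Del | actX d @` range f = range f].

Lemma Del'E : Del' = range phi.
Proof.
apply/seteqP; split => d.
  move=> Dd; have : range f (actX d (f y0)).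
    by rewrite -Dd; exists (f y0) => //; exists y0.
  case=> y _ E; have [g [_ ->]] := lift y0 y d (esym E).
  by exists g.
case=> g _ <-; rewrite /Del' /=.
apply/seteqP; split => x.
  by case=> _ [y _ <-] <-; rewrite -phiP; exists (actY g y).
case=> y _ <-; exists (f (actY (g^-1)%g y)); first by exists (actY (g^-1)%g y).
by rewrite -phiP -(proj2 hactY) mulgV (proj1 hactY).
Qed.

Lemma Comp_closed a : closedset dX (Comp a).
Proof.
have := image_closed dY dX (actX a \o f) setT hdX hYc
  (cont_comp dY dX dX f (actX a) hf (hactXc a)) (fun p np => False_ind _ (np I)).
by [].
Qed.

Lemma Comp_conn a : mconnected_set dX (Comp a).
Proof.
exact: (image_connected dY dX (actX a \o f) hYconn
  (cont_comp dY dX dX f (actX a) hf (hactXc a))).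
Qed.

Lemma Comp_cover : exists L : seq Del, forall x, exists a, List.In a L /\ Comp a x.
Proof.
have [N hN] := bound_nat A.
have cf : closedset dX (range f).
  exact: (image_closed dY dX f setT hdX hYc hf (fun p np => False_ind _ (np I))).
exists (map (fun w => (prodw w)^-1)%g (words SD N)) => x.
have [w [wN [y _ E]]] := coreX_list hN cf (fun tau t0 =>
  let: ex_intro y hy := QIsurj x tau t0 in
  ex_intro _ (f y) (conj (ex_intro2 _ _ y I erefl) hy)).
exists ((prodw w)^-1)%g; split; first by apply: mem_In; apply: (map_f (fun w => (prodw w)^-1)%g).
exists y => //; rewrite E -(proj2 hactX) mulVg (proj1 hactX) //.
Qed.

Lemma Comp_open a : mopen dX (Comp a).
Proof.
have [L HL] := Comp_cover.
exact: (clopen_partition dX L Comp Comp_closed HL Comp_overlap).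
Qed.

Lemma Comp_component a : mcomponent dX (Comp a).
Proof.
split; first by exists (actX a (f y0)), y0.
split; first exact: Comp_conn.
move=> C' cC' sub'; apply/seteqP; split; last exact: sub'.
move=> x C'x; apply: (connected_clopen dX C' (Comp a) cC' (Comp_open a) (Comp_closed a)) => //.
by exists (actX a (f y0)); split; [apply: sub'; exists y0 | exists y0].
Qed.

Lemma component_Comp Cc : mcomponent dX Cc -> exists a, Cc = Comp a.
Proof.
move=> [[x Cx] [cC maxC]].
have [L HL] := Comp_cover; have [a [_ Ax]] := HL x.
exists a; apply/esym/maxC; first exact: Comp_conn.
move=> z Cz; apply: (connected_clopen dX Cc (Comp a) cC (Comp_open a) (Comp_closed a)) => //.
by exists x.
Qed.

Lemma Comp_mem a b x : Comp a x -> Comp b x -> exists g, a = (b * phi g)%g.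
Proof.
move=> [y _ <-] [y' _ E].
have E2 : actX (b^-1 * a)%g (f y) = f y'.
  by rewrite (proj2 hactX) -E -(proj2 hactX) mulVg (proj1 hactX).
have [g [_ hg]] := lift y y' _ E2.
by exists g; rewrite -hg mulVKg.
Qed.

Definition coset (a : Del) : set Del := [set (a * h)%g | h in Del'].

Lemma Del'_phi g : Del' (phi g).
Proof. by rewrite Del'E; exists g. Qed.

Lemma coset_shift a g : coset (a * phi g)%g = coset a.
Proof.
apply/seteqP; split => x [h Dh <-].
  rewrite Del'E in Dh; case: Dh => k _ <-.
  by exists (phi g * phi k)%g; [rewrite -phi_hom; exact: Del'_phi | rewrite mulgA].
rewrite Del'E in Dh; case: Dh => k _ <-.
exists ((phi g)^-1 * phi k)%g; first by rewrite -phiV -phi_hom; exact: Del'_phi.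
by rewrite -mulgA mulVKg.
Qed.

Lemma coset_Comp a b : coset a = coset b <-> Comp a = Comp b.
Proof.
split.
  move=> E; have : coset b a by rewrite -E; exists 1%g; [rewrite -phi1; exact: Del'_phi | rewrite mulg1].
  case=> h Dh Eh; rewrite Del'E in Dh; case: Dh => g _ Eg.
  by rewrite -Eh -Eg Comp_phi.
move=> E; have : Comp b (actX a (f y0)) by rewrite -E; exists y0.
move=> /(Comp_mem a b _ (ex_intro2 _ _ y0 I erefl)) [g ->].
exact: coset_shift.
Qed.

Definition Cset (K : set Del) : set X := [set x | exists2 a, K a & Comp a x].

Lemma Cset_coset a : Cset (coset a) = Comp a.
Proof.
apply/seteqP; split => x.
  case=> _ [h Dh <-]; rewrite Del'E in Dh; case: Dh => g _ <-.
  by rewrite Comp_phi.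
move=> Ax; exists a => //; exists 1%g; last by rewrite mulg1.
rewrite -phi1; exact: Del'_phi.
Qed.

Lemma cosets_fin : exists n, has_card (left_cosets Del') n.
Proof.
have [L HL] := Comp_cover.
apply: (finite_has_card (map coset L)) => K [a _ <-].
have [b [bL Bx]] := HL (actX a (f y0)).
have -> : [set (a * h)%g | h in Del'] = coset b.
  apply/(coset_Comp a b); apply: Comp_overlap Bx; exact: (ex_intro2 _ _ y0 I erefl).
elim: L bL {HL} => [|c L IH] //= [->|/IH]; [left|right] => //.
Qed.

Lemma count_components : exists n, has_card (left_cosets Del') n /\
  has_card [set Cc | mcomponent dX Cc] n.
Proof.
have [n [e [ie re]]] := cosets_fin.
have ec : forall i, exists a, e i = coset a.
  move=> i; have : left_cosets Del' (e i) by rewrite -re; exists i.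
  by case=> a _ <-; exists a.
exists n; split; first by exists e.
exists (fun i => Cset (e i)); split.
  move=> i j E; apply: ie; have [a ea] := ec i; have [b eb] := ec j.
  rewrite ea eb !Cset_coset in E *; exact/coset_Comp.
apply/seteqP; split => Cc.
  by case=> i _ <-; have [a ->] := ec i; rewrite Cset_coset; exact: Comp_component.
move=> /component_Comp [a ->].
have : range e (coset a) by rewrite re; exists a.
by case=> i _ ei; exists i => //; rewrite ei Cset_coset.
Qed.

Lemma comp_trans Cc Cc' : mcomponent dX Cc -> mcomponent dX Cc' ->
  exists d, actX d @` Cc = Cc'.
Proof.
move=> /component_Comp [a ->] /component_Comp [b ->].
exists (b * a^-1)%g; apply/seteqP; split => x.
  case=> _ [y _ <-] <-; exists y => //.
  by rewrite -(proj2 hactX) mulgVK.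
case=> y _ <-; exists (actX a (f y)); first by exists y.
by rewrite -(proj2 hactX) mulgVK.
Qed.

Lemma particular : mhomeomorphism dY dX f ->
  exists psi : Gam -> Del, bijective psi /\ group_hom psi /\
    forall g y, f (actY g y) = actX (psi g) (f y).
Proof.
move=> [k [fk [kf _]]].
have inj : injective phi.
  move=> a b E; apply: freeY; apply: (can_inj fk).
  by rewrite !phiP E.
have surj : forall d, exists g, phi g = d.
  move=> d; have : Del' d.
    rewrite /Del'; apply/seteqP; split => x.
      by case=> _ [y _ <-] <-; exists (k (actX d (f y))).
    move=> _; exists (actX (d^-1)%g x).
      by exists (k (actX (d^-1)%g x)).
    by rewrite -(proj2 hactX) mulgV (proj1 hactX).
  by rewrite Del'E; case=> g _ <-; exists g.
exists phi; split; last by split; [exact: phi_hom | exact: phiP].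
exists (fun d => projT1 (cid (surj d))).
  by move=> g; apply: inj; case: cid.
by move=> d; case: cid.
Qed.

Lemma main_concl :
  [/\ (exists n, has_card (left_cosets Del') n),
      exists phi : Gam -> Del,
        let F := [set g : Gam | phi g = 1%g] in
        [/\ group_hom phi, range phi = Del', (exists n, has_card F n) &
          exists h : {x : X | range f x} -> orbit_space actY F,
            [/\ homeomorphism (subspace_open (mopen dX) (range f))
                   (quotient_open (mopen dY) (orbit_proj actY F)) h,
                (forall y (x : {x : X | range f x}),
                   proj1_sig x = f y -> h x = orbit_proj actY F y) &
                (forall g y (x : {x : X | range f x}),
                   proj1_sig x = actX (phi g) (f y) ->
                   h x = orbit_proj actY F (actY g y))]],
      [/\ mcomponent dX (range f),
          (exists n, has_card (left_cosets Del') n /\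
                     has_card [set C | mcomponent dX C] n) &
          (forall C C', mcomponent dX C -> mcomponent dX C' ->
             exists d, actX d @` C = C')] &
      (mhomeomorphism dY dX f ->
         exists psi : Gam -> Del, bijective psi /\ group_hom psi /\
           forall g y, f (actY g y) = actX (psi g) (f y))].
Proof.
split.
- exact: cosets_fin.
- exists phi; split.
  + exact: phi_hom.
  + by rewrite Del'E.
  + exact: F_fin.
  + exists hh; split; [exact: hh_homeo | exact: hh_f | exact: hh_act].
- split; [rewrite -Comp1; exact: Comp_component | exact: count_components | exact: comp_trans].
- exact: particular.
Qed.

End Main.

Theorem theorem4p1 (R : realType)
  (Gam Del : groupType) (SG : seq Gam) (SD : seq Del)
  (Y X : Type) (dY : Y -> Y -> R) (dX : X -> X -> R)
  (actY : Gam -> Y -> Y) (actX : Del -> X -> X) (f : Y -> X)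
  (hSG : sym_gen_set SG) (hSD : sym_gen_set SD)
  (hdY : is_metric dY) (hdX : is_metric dX)
  (hYc : mcompact dY) (hXc : mcompact dX) (hYconn : mconnected dY)
  (hactY : is_action actY) (hactX : is_action actX)
  (hactYc : forall g, mcontinuous dY dY (actY g))
  (hactXc : forall g, mcontinuous dX dX (actX g))
  (hfreeorb : exists y, free_orbit_at actY y)
  (hfree : free_action actX)
  (hf : mcontinuous dY dX f)
  (hQI : exists (I : Type) (t tau : I -> R) (C A : R),
     (forall i, 0 < t i /\ 0 < tau i) /\
     (forall r : R, 0 < r -> exists i, t i = r) /\
     (forall r : R, 0 < r -> exists i, tau i = r) /\
     1 <= C /\ 0 <= A /\
     forall i,
       (forall y y',
          C^-1 * warped_dist actY SG dY (t i) y y' - A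
            <= warped_dist actX SD dX (tau i) (f y) (f y') /\
          warped_dist actX SD dX (tau i) (f y) (f y')
            <= C * warped_dist actY SG dY (t i) y y' + A) /\
       (forall x, exists y, warped_dist actX SD dX (tau i) x (f y) <= A)) :
  let Del' := [set d : Del | actX d @` range f = range f] in
  [/\ (* (1) *)
      (exists n, has_card (left_cosets Del') n),
      (* (1) and (2) *)
      exists phi : Gam -> Del,
        let F := [set g : Gam | phi g = 1%g] in
        [/\ group_hom phi, range phi = Del', (exists n, has_card F n) &
          exists h : {x : X | range f x} -> orbit_space actY F,
            [/\ homeomorphism (subspace_open (mopen dX) (range f))
                   (quotient_open (mopen dY) (orbit_proj actY F)) h,
                (forall y (x : {x : X | range f x}),
                   proj1_sig x = f y -> h x = orbit_proj actY F y) &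
                (forall g y (x : {x : X | range f x}),
                   proj1_sig x = actX (phi g) (f y) ->
                   h x = orbit_proj actY F (actY g y))]],
      (* (3) *)
      [/\ mcomponent dX (range f),
          (exists n, has_card (left_cosets Del') n /\
                     has_card [set C | mcomponent dX C] n) &
          (forall C C', mcomponent dX C -> mcomponent dX C' ->
             exists d, actX d @` C = C')] &
      (* in particular *)
      (mhomeomorphism dY dX f ->
         exists psi : Gam -> Del, bijective psi /\ group_hom psi /\
           forall g y, f (actY g y) = actX (psi g) (f y))].
Proof.
have [y0 hy0] := hfreeorb.
case: hQI => I [t [tau [C [A [hpos [ht [htau [hC [hA hq]]]]]]]]].
have C0 : 0 < C by apply: lt_le_trans hC; exact: ltr01.
have QIlow : forall y y' (K : R),
  (forall tau, 0 < tau -> warped_dist actX SD dX tau (f y) (f y') <= K) ->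
  forall t, 0 < t -> warped_dist actY SG dY t y y' <= C * (K + A).
  move=> y y' K H t' t0; have [i ti] := ht t' t0.
  have [[hl _] _] := (proj1 (hq i) y y', proj2 (hq i)).
  have hK := H (tau i) (proj2 (hpos i)).
  have : C^-1 * warped_dist actY SG dY (t i) y y' <= K + A by lra.
  by rewrite -ti ler_pdivrMl.
have QIgen : forall y s, s \in SG -> forall tau', 0 < tau' ->
  warped_dist actX SD dX tau' (f y) (f (actY s y)) <= C + A.
  move=> y s sS tau' t0; have [i ti] := htau tau' t0.
  have hu := proj2 (proj1 (hq i) y (actY s y)).
  have hg := @warped_gen _ _ _ actY SG dY hdY (t i) y s (proj1 (hpos i)) sS.
  rewrite -ti; apply: le_trans hu _; rewrite lerD2r.
  by rewrite -{2}[C]mulr1 ler_pM2l.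
have QIsurj : forall x tau', 0 < tau' ->
  exists y, warped_dist actX SD dX tau' x (f y) <= A.
  by move=> x tau' t0; have [i <-] := htau tau' t0; exact: (proj2 (hq i)).
exact: (main_concl _ _ _ _ _ _ _ _ _ _ _ _ hSG hSD hdY hdX hYc hYconn hactY hactX hactYc hactXc
  hfree hf y0 C A hy0 QIlow QIgen QIsurj).
Qed.
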